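(* Let $\varphi:\mathbb{Z}^2\to S^4$ be a circular net. Then there exists a complex two-parameter family of principal contact element nets congruent to $\varphi$.
   Context: $\mathbb{H}$ denotes the quaternions, $\mathbb{C}=\mathrm{span}_{\mathbb{R}}\{1,i\}\subset\mathbb{H}$; $\mathbb{H}^2$ (right $\mathbb{H}$-vector space) $\cong\mathbb{C}^4$, right multiplication by $j$ being $\mathbb{C}$-antilinear. $S^4\cong\mathbb{HP}^1=\{v\mathbb{H}\}$, $\mathbb{CP}^3=\mathbb{P}(\mathbb{C}^4)$; the twistor fibre over $v\mathbb{H}$ is the projective line through $[v],[vj]$. $Q^4=\{[\alpha]\in\mathbb{P}(\Lambda^2\mathbb{C}^4):\alpha\wedge\alpha=0\}$ is the Plücker quadric; $[v\wedge w]$ is identified with the projective line of $\mathbb{CP}^3$ through $[v],[w]$. The antilinear extension of $v\wedge w\mapsto vj\wedge wj$ gives a real structure $j$ on $Q^4$ whose fixed (''real'') points are the twistor fibres $[v\wedge vj]$, and $v\mathbb{H}\mapsto[v\wedge vj]$ identifies $S^4$ with this real set; non-real points of $Q^4$ are twistor lifts of round two-spheres with conformal structure. A null line is a projective line contained in $Q^4$. A contact element is a null line containing a real point (it parametrizes the two-spheres touching one another at that point, together with the point). A circular net $\varphi:\mathbb{Z}^2\to S^4$ is a map such that the four points of each elementary face lie on a circle (equivalently, their real points in $Q^4$ lie in a projective plane). A principal contact element net is a map $\Phi$ from $\mathbb{Z}^2$ to the set of null lines of $Q^4$ such that each $\Phi(m,n)$ is a contact element, the real points of the $\Phi(m,n)$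 are distinct, and $\Phi(m,n)\cap\Phi(m+1,n)\neq\emptyset$, $\Phi(m,n)\cap\Phi(m,n+1)\neq\emptyset$ for all $(m,n)$. $\Phi$ is congruent to $\varphi:\mathbb{Z}^2\to S^4$ if for each $k\in\mathbb{Z}^2$ the point $\varphi(k)$ (as a real point of $Q^4$) lies on $\Phi(k)$. *)

(* Defs.v *)
From HB Require Import structures.
From mathcomp Require Import all_boot all_order all_algebra.
From mathcomp Require Import reals.
From mathcomp.real_closed Require Import complex.
Set Implicit Arguments. Unset Strict Implicit. Unset Printing Implicit Defensive.
Import Order.TTheory GRing.Theory Num.Theory.
Local Open Scope ring_scope.

Section Twistor.
Variable R : realType.
Local Notation C := R[i].

(* H^2 as C^4.  A quaternion is written q = z1 + j z2 (z1, z2 in C), so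
   that right multiplication by a complex number is C-linear; a vector
   (q1, q2) of H^2 is the vector (z1, z2, z3, z4) of C^4 where
   q1 = z1 + j z2, q2 = z3 + j z4.  Right multiplication by j is then the
   C-antilinear map  (z1,z2,z3,z4) |-> (-conj z2, conj z1, -conj z4, conj z3).       *)
Definition rightj (v : 'rV[C]_4) : 'rV[C]_4 :=
  \row_(i < 4)
    match val i with
    | 0%N => - Num.conj (v 0 (inord 1))
    | 1%N => Num.conj (v 0 (inord 0))
    | 2%N => - Num.conj (v 0 (inord 3))
    | _   => Num.conj (v 0 (inord 2))
    end.

(* Lambda^2 C^4 = C^6 with basis e01, e02, e03, e12, e13, e23 (indices 0..5). *)
Definition plA (k : 'I_6) : 'I_4 :=
  inord (match val k with 0%N | 1%N | 2%N => 0 | 3%N | 4%N => 1 | _ => 2 end)%N.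
Definition plB (k : 'I_6) : 'I_4 :=
  inord (match val k with 0%N => 1 | 1%N => 2 | 2%N => 3 | 3%N => 2
                          | 4%N => 3 | _ => 3 end)%N.

Definition wedge (v w : 'rV[C]_4) : 'rV[C]_6 :=
  \row_(k < 6) (v 0 (plA k) * w 0 (plB k) - v 0 (plB k) * w 0 (plA k)).

(* alpha /\ alpha = 2 * plq alpha * e0123 *)
Definition plq (a : 'rV[C]_6) : C :=
  a 0 (inord 0) * a 0 (inord 5) - a 0 (inord 1) * a 0 (inord 4)
  + a 0 (inord 2) * a 0 (inord 3).

(* the Pluecker quadric Q^4 (as a cone in C^6) *)
Definition inQ (a : 'rV[C]_6) : Prop := plq a = 0.

(* the real point [v /\ vj] of Q^4 attached to the point vH of S^4 = HP^1 *)
Definition realpt (v : 'rV[C]_4) : 'rV[C]_6 := wedge v (rightj v).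

Definition distinctS4 (v w : 'rV[C]_4) : Prop :=
  ~~ (realpt v == realpt w)%MS.

(* Projective lines of P(Lambda^2 C^4) are represented by 2x6 matrices of
   rank 2 (their row space); equality of lines is (L == L')%MS. *)
Definition null_line (L : 'M[C]_(2,6)) : Prop :=
  \rank L = 2%N /\ forall x : 'rV[C]_6, (x <= L)%MS -> inQ x.

Definition has_real_point (L : 'M[C]_(2,6)) (v : 'rV[C]_4) : Prop :=
  v != 0 /\ (realpt v <= L)%MS.

Definition contact_element (L : 'M[C]_(2,6)) : Prop :=
  null_line L /\ exists v, has_real_point L v.

Definition lines_meet (L L' : 'M[C]_(2,6)) : Prop :=
  (0 < \rank (L :&: L')%MS)%N.

(* Nets on Z^2.  A map Z^2 -> S^4 is given by nonzero representatives
   phi m n in C^4 of the quaternionic lines (phi m n) H. *)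

Definition four_distinct (a b c d : 'rV[C]_4) : Prop :=
  [/\ distinctS4 a b, distinctS4 a c & distinctS4 a d] /\
  [/\ distinctS4 b c, distinctS4 b d & distinctS4 c d].

Definition coplanar4 (a b c d : 'rV[C]_4) : Prop :=
  (\rank (col_mx (col_mx (realpt a) (realpt b))
                 (col_mx (realpt c) (realpt d))) <= 3)%N.

Definition circular_net (phi : int -> int -> 'rV[C]_4) : Prop :=
  (forall m n, phi m n != 0) /\
  forall m n,
    four_distinct (phi m n) (phi (m + 1) n) (phi (m + 1) (n + 1)) (phi m (n + 1))
    /\ coplanar4 (phi m n) (phi (m + 1) n) (phi (m + 1) (n + 1)) (phi m (n + 1)).

Definition distinct_real_points (L L' : 'M[C]_(2,6)) : Prop :=
  forall v w, has_real_point L v -> has_real_point L' w -> distinctS4 v w.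

Definition principal_contact_element_net (Phi : int -> int -> 'M[C]_(2,6)) : Prop :=
  forall m n,
    [/\ contact_element (Phi m n),
        distinct_real_points (Phi m n) (Phi (m + 1) n),
        distinct_real_points (Phi m n) (Phi m (n + 1)),
        lines_meet (Phi m n) (Phi (m + 1) n)
      & lines_meet (Phi m n) (Phi m (n + 1))].

Definition congruent (Phi : int -> int -> 'M[C]_(2,6)) (phi : int -> int -> 'rV[C]_4) : Prop :=
  forall m n, (realpt (phi m n) <= Phi m n)%MS.

End Twistor.

(* Main.v *)
Require Import Defs.
From HB Require Import structures.
From mathcomp Require Import all_boot all_order all_algebra.
From mathcomp Require Import reals.
From mathcomp.real_closed Require Import complex.
From mathcomp Require Import ring zify.
Import Order.TTheory GRing.Theory Num.Theory.
Local Open Scope ring_scope.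
Section S.
Variable R : realType.
Local Notation C := R[i].
Local Notation "x ~6 k" := (x 0 (@inord 5 k)) (at level 10).
Local Notation "x ~4 k" := (x 0 (@inord 3 k)) (at level 10).
Local Notation cj := (@Num.conj C).

Lemma vinord n k : (k < n.+1)%N -> \val (@inord n k) = k.
Proof. exact: inordK. Qed.

Lemma realpt_c (v : 'rV[C]_4) :
  ((realpt v ~6 0) = (v ~4 0) * cj (v ~4 0) + (v ~4 1) * cj (v ~4 1)) /\
  ((realpt v ~6 1) = - (v ~4 0) * cj (v ~4 3) + (v ~4 2) * cj (v ~4 1)) /\
  ((realpt v ~6 2) = (v ~4 0) * cj (v ~4 2) + (v ~4 3) * cj (v ~4 1)) /\
  ((realpt v ~6 3) = - (v ~4 1) * cj (v ~4 3) - (v ~4 2) * cj (v ~4 0)) /\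
  ((realpt v ~6 4) = (v ~4 1) * cj (v ~4 2) - (v ~4 3) * cj (v ~4 0)) /\
  ((realpt v ~6 5) = (v ~4 2) * cj (v ~4 2) + (v ~4 3) * cj (v ~4 3)).
Proof.
rewrite /realpt /wedge /rightj /plA /plB !mxE !vinord //=.

split; [|split;[|split;[|split;[|split]]]]; ring.
Qed.

Lemma eq6 (x y : 'rV[C]_6) :
  x ~6 0 = y ~6 0 -> x ~6 1 = y ~6 1 -> x ~6 2 = y ~6 2 ->
  x ~6 3 = y ~6 3 -> x ~6 4 = y ~6 4 -> x ~6 5 = y ~6 5 -> x = y.
Proof.
move=> h0 h1 h2 h3 h4 h5; apply/rowP => k.
have E : forall j (Hj : (j < 6)%N), Ordinal Hj = inord j.
  by move=> j Hj; apply/val_inj; rewrite /= inordK.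
case: k => [[|[|[|[|[|[|//]]]]]] Hk]; rewrite E ?mxE //.
Qed.

Lemma eq4 (x y : 'rV[C]_4) :
  x ~4 0 = y ~4 0 -> x ~4 1 = y ~4 1 -> x ~4 2 = y ~4 2 ->
  x ~4 3 = y ~4 3 -> x = y.
Proof.
move=> h0 h1 h2 h3; apply/rowP => k.
have E : forall j (Hj : (j < 4)%N), Ordinal Hj = inord j.
  by move=> j Hj; apply/val_inj; rewrite /= inordK.
case: k => [[|[|[|[|//]]]] Hk]; rewrite E ?mxE //.
Qed.

Lemma sumsq0 (x y : C) : x * cj x + y * cj y = 0 -> x = 0 /\ y = 0.
Proof.
rewrite -!normCK => /eqP; rewrite paddr_eq0 ?exprn_ge0 ?normr_ge0 //.
by rewrite !expf_eq0 /= !normr_eq0 => /andP[/eqP -> /eqP ->].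
Qed.

Definition Bf (x y : 'rV[C]_6) : C :=
  x ~6 0 * y ~6 5 + x ~6 5 * y ~6 0
  - x ~6 1 * y ~6 4 - x ~6 4 * y ~6 1
  + x ~6 2 * y ~6 3 + x ~6 3 * y ~6 2.

Lemma BfC x y : Bf x y = Bf y x.
Proof. rewrite /Bf; ring. Qed.

Lemma realpt_s (v : 'rV[C]_4) :
  let X := realpt v in
  [/\ cj (X ~6 0) = X ~6 0, cj (X ~6 5) = X ~6 5, X ~6 4 = cj (X ~6 1),
      X ~6 3 = - cj (X ~6 2) &
      X ~6 0 * X ~6 5 = X ~6 1 * cj (X ~6 1) + X ~6 2 * cj (X ~6 2)].
Proof.
move=> X; have [h0 [h1 [h2 [h3 [h4 h5]]]]] := realpt_c v.
rewrite /X h0 h1 h2 h3 h4 h5 ?(rmorphD, rmorphN, rmorphB, rmorphM) /= ?conjCK.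
split; ring.
Qed.

Lemma realpt_nz (v : 'rV[C]_4) : v != 0 ->
  realpt v ~6 0 != 0 \/ realpt v ~6 5 != 0.
Proof.
move=> vnz; have [h0 [_ [_ [_ [_ h5]]]]] := realpt_c v.
rewrite h0 h5.
case: (eqVneq (v ~4 0 * cj (v ~4 0) + v ~4 1 * cj (v ~4 1)) 0) => [/sumsq0 [e0 e1]|]; last by left.
case: (eqVneq (v ~4 2 * cj (v ~4 2) + v ~4 3 * cj (v ~4 3)) 0) => [/sumsq0 [e2 e3]|]; last by right.
have : v = 0 by apply: eq4; rewrite ?mxE.
by move/eqP; rewrite (negbTE vnz).
Qed.

Definition rstruct (X : 'rV[C]_6) :=
  [/\ cj (X ~6 0) = X ~6 0, cj (X ~6 5) = X ~6 5, X ~6 4 = cj (X ~6 1),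
      X ~6 3 = - cj (X ~6 2) &
      X ~6 0 * X ~6 5 = X ~6 1 * cj (X ~6 1) + X ~6 2 * cj (X ~6 2)].

Lemma cjN (x : C) : cj (- x) = - cj x.
Proof. exact: rmorphN. Qed.
Lemma cjM (x y : C) : cj (x * y) = cj x * cj y.
Proof. exact: rmorphM. Qed.

Lemma Kmain (X Y : 'rV[C]_6) : rstruct X -> rstruct Y ->
  X ~6 0 != 0 -> Y ~6 0 != 0 -> Bf X Y = 0 ->
  exists2 c, c != 0 & Y = c *: X.
Proof.
move=> [sX0 sX5 sX4 sX3 pX] [sY0 sY5 sY4 sY3 pY] nX nY B0.
have key : X ~6 0 * Y ~6 0 * Bf X Y =
   (X ~6 0 * Y ~6 1 - Y ~6 0 * X ~6 1) * cj (X ~6 0 * Y ~6 1 - Y ~6 0 * X ~6 1) +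
   (X ~6 0 * Y ~6 2 - Y ~6 0 * X ~6 2) * cj (X ~6 0 * Y ~6 2 - Y ~6 0 * X ~6 2).
  rewrite !(rmorphB, rmorphM) /= sX0 sY0 /Bf sX4 sX3 sY4 sY3.
  have -> : forall a b c f g h i l : C,
     a * g * (a * l + f * g - b * cj h - cj b * h + c * - cj i + - cj c * i)
     = a^+2 * (g * l) + g^+2 * (a * f) - a * g * (b * cj h + cj b * h + c * cj i + cj c * i).
    by move=> *; ring.
  rewrite pX pY; ring.
move: key; rewrite B0 mulr0 => /esym /sumsq0 [e1 e2].
set c := Y ~6 0 / X ~6 0.
have cc : cj c = c by rewrite /c rmorphM fmorphV /= sX0 sY0.
have cnz : c != 0 by rewrite /c mulf_neq0 ?invr_neq0.
exists c => //.
have y1 : Y ~6 1 = c * X ~6 1.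
  have -> : Y ~6 1 = c * X ~6 1 + (X ~6 0 * Y ~6 1 - Y ~6 0 * X ~6 1) / X ~6 0
    by rewrite /c; field.
  by rewrite e1 mul0r addr0.
have y2 : Y ~6 2 = c * X ~6 2.
  have -> : Y ~6 2 = c * X ~6 2 + (X ~6 0 * Y ~6 2 - Y ~6 0 * X ~6 2) / X ~6 0
    by rewrite /c; field.
  by rewrite e2 mul0r addr0.
have y0 : Y ~6 0 = c * X ~6 0 by rewrite /c divfK.
have y3 : Y ~6 3 = c * X ~6 3 by rewrite sY3 sX3 y2 rmorphM /= cc mulrN.
have y4 : Y ~6 4 = c * X ~6 4 by rewrite sY4 sX4 y1 rmorphM /= cc.
apply: eq6; rewrite mxE => //.
apply: (mulfI nY).
have pY' : Y ~6 0 * Y ~6 5 = Y ~6 1 * Y ~6 4 - Y ~6 2 * Y ~6 3.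
  by rewrite pY sY4 sY3 mulrN opprK.
have pX' : X ~6 0 * X ~6 5 = X ~6 1 * X ~6 4 - X ~6 2 * X ~6 3.
  by rewrite pX sX4 sX3 mulrN opprK.
rewrite pY' y1 y2 y3 y4 y0.
have -> : c * X ~6 1 * (c * X ~6 4) - c * X ~6 2 * (c * X ~6 3)
   = c * c * (X ~6 1 * X ~6 4 - X ~6 2 * X ~6 3) by ring.
rewrite -pX'; ring.
Qed.

Lemma zero_struct X : rstruct X -> X ~6 0 = 0 ->
  [/\ X ~6 1 = 0, X ~6 2 = 0, X ~6 3 = 0 & X ~6 4 = 0].
Proof.
move=> [_ _ s4 s3 p] e0; move: p; rewrite e0 mul0r => /esym /sumsq0 [e1 e2].
by rewrite s4 s3 e1 e2 rmorph0 oppr0.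
Qed.

Lemma Kgen (X Y : 'rV[C]_6) : rstruct X -> rstruct Y ->
  (X ~6 0 != 0) || (X ~6 5 != 0) -> (Y ~6 0 != 0) || (Y ~6 5 != 0) ->
  Bf X Y = 0 -> exists2 c, c != 0 & Y = c *: X.
Proof.
move=> sX sY nX nY B0.
case: (eqVneq (X ~6 0) 0) => x0; case: (eqVneq (Y ~6 0) 0) => y0.
- have [x1 x2 x3 x4] := zero_struct _ sX x0.
  have [y1 y2 y3 y4] := zero_struct _ sY y0.
  move: nX nY; rewrite x0 y0 !eqxx /= => x5 y5.
  exists (Y ~6 5 / X ~6 5); first by rewrite mulf_neq0 ?invr_neq0.
  apply: eq6; rewrite mxE ?x0 ?y0 ?x1 ?y1 ?x2 ?y2 ?x3 ?y3 ?x4 ?y4 ?mulr0 //.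
  by rewrite divfK.
- have [x1 x2 x3 x4] := zero_struct _ sX x0.
  move: nX; rewrite x0 eqxx /= => x5.
  move: B0; rewrite /Bf x0 x1 x2 x3 x4 !mul0r ?mulr0.
  move=> /eqP; rewrite !(addr0, subr0, add0r) mulf_eq0 (negbTE x5) (negbTE y0) //.
- have [y1 y2 y3 y4] := zero_struct _ sY y0.
  move: nY; rewrite y0 eqxx /= => y5.
  move: B0; rewrite /Bf y0 y1 y2 y3 y4 ?mul0r !mulr0.
  move=> /eqP; rewrite !(addr0, subr0, add0r) mulf_eq0 (negbTE x0) (negbTE y5) //.
- exact: Kmain.
Qed.

Lemma realpt_rstruct v : rstruct (realpt v).
Proof. exact: realpt_s. Qed.

Lemma K_eq (v w : 'rV[C]_4) : v != 0 -> w != 0 ->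
  Bf (realpt v) (realpt w) = 0 -> (realpt v == realpt w)%MS.
Proof.
move=> nv nw B0.
have nz : forall u : 'rV[C]_4, u != 0 -> (realpt u ~6 0 != 0) || (realpt u ~6 5 != 0).
  by move=> u /realpt_nz [->|->] //; rewrite orbT.
have [c cnz ->] := Kgen _ _ (realpt_rstruct v) (realpt_rstruct w) (nz _ nv) (nz _ nw) B0.
by apply/eqmxP; apply: eqmx_sym; exact: eqmx_scale.
Qed.

Lemma sub_colL m1 m2 (A : 'M[C]_(m1,6)) (B : 'M[C]_(m2,6)) : (A <= col_mx A B)%MS.
Proof. by rewrite -addsmxE addsmxSl. Qed.
Lemma sub_colR m1 m2 (A : 'M[C]_(m1,6)) (B : 'M[C]_(m2,6)) : (B <= col_mx A B)%MS.
Proof. by rewrite -addsmxE addsmxSr. Qed.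

Lemma sub_colP m (A : 'M[C]_(m,6)) (v x : 'rV[C]_6) :
  (x <= col_mx A v)%MS -> exists y k, (y <= A)%MS /\ x = y + k *: v.
Proof.
rewrite -addsmxE => /sub_addsmxP [[u1 u2] /= ->].
exists (u1 *m A), (u2 0 0); split; first exact: submxMl.
by rewrite {1}[u2]mx11_scalar mul_scalar_mx.
Qed.

Lemma col_memb m (A : 'M[C]_(m,6)) (v y : 'rV[C]_6) k :
  (y <= A)%MS -> ((y + k *: v)%R <= col_mx A v)%MS.
Proof.
move=> yA; apply: addmx_sub; first exact: submx_trans yA (sub_colL _ _ _ _).
by apply: scalemx_sub; exact: sub_colR.
Qed.

Lemma span2P (a b x : 'rV[C]_6) :
  (x <= col_mx a b)%MS <-> exists s t, x = s *: a + t *: b.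
Proof.
split.
  move=> /sub_colP [y [k [/sub_rVP [s ->] ->]]]; by exists s, k.
move=> [s [t ->]]; apply: col_memb; apply: scalemx_sub; exact: submx_refl.
Qed.

Lemma rank_add1 m (A : 'M[C]_(m,6)) (v : 'rV[C]_6) :
  ~~ (v <= A)%MS -> \rank (col_mx A v) = (\rank A).+1.
Proof.
move=> nvA.
have vnz : v != 0 by apply: contra nvA => /eqP ->; exact: sub0mx.
have e2 : \rank (A + v)%MS = \rank (col_mx A v).
  by apply: eqmx_rank; apply/eqmxP; exact: addsmxE.
rewrite -e2.
have := mxrank_sum_cap A v; rewrite rank_rV vnz.
suff -> : \rank (A :&: v) = 0%N by rewrite addn0 addn1.
apply/eqP; apply: contraR nvA => nz.
have sc : (A :&: v <= v)%MS by exact: capmxSr.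
have : (A :&: v == v)%MS.
  rewrite -(geq_leqif (mxrank_leqif_eq sc)) rank_rV vnz.
  by rewrite lt0n.
move=> /eqmxP e; rewrite -e; exact: capmxSl.
Qed.

Definition indep (a b : 'rV[C]_6) := forall s t, s *: a + t *: b = 0 -> s = 0 /\ t = 0.

Lemma rank_mk2 (a b : 'rV[C]_6) : indep a b -> \rank (col_mx a b) = 2%N.
Proof.
move=> ind.
have anz : a != 0.
  apply/eqP => a0; have := ind 1 0; rewrite a0 scaler0 scale0r addr0 => /(_ erefl) [].
  by move/eqP; rewrite oner_eq0.
rewrite rank_add1 ?rank_rV ?anz //.
apply/negP => /sub_rVP [k e]; have := ind k (-1); rewrite e scaleN1r subrr.
move=> /(_ erefl) [_ /eqP]; by rewrite oppr_eq0 oner_eq0.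
Qed.

Lemma rank2_indep (a b : 'rV[C]_6) : \rank (col_mx a b) = 2%N -> indep a b.
Proof.
move=> r2 s t e.
case: (eqVneq t 0) => [t0|tnz].
  move: e; rewrite t0 scale0r addr0 => /eqP; rewrite scaler_eq0 => /orP [/eqP //|/eqP a0].
  exfalso; move: r2; rewrite a0.
  have : (\rank (col_mx (0 : 'rV[C]_6) b) <= \rank b)%N.
    apply: mxrankS; rewrite col_mx_sub sub0mx submx_refl //.
  by move=> + r2; rewrite r2 rank_rV; case: (b != 0).
exfalso.
have : (b <= a)%MS.
  apply/sub_rVP; exists (- s / t).
  apply: (scalerI tnz); rewrite scalerA mulrC divfK // scaleNr.
  by apply/eqP; rewrite -addr_eq0 addrC; apply/eqP.
move=> ba; have : (\rank (col_mx a b) <= \rank a)%N.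
  by apply: mxrankS; rewrite col_mx_sub submx_refl ba.
by rewrite r2 rank_rV; case: (a != 0).
Qed.

Lemma mk2_rows (L : 'M[C]_(2,6)) : col_mx (row 0 L) (row 1 L) = L.
Proof.
apply/matrixP => i j; rewrite mxE; case: splitP => k Hk; rewrite !mxE.
  by congr (L _ j); apply/val_inj; rewrite /= Hk (ord1 k).
by congr (L _ j); apply/val_inj; rewrite /= Hk (ord1 k).
Qed.

Lemma BfDl (s t : C) x y z : Bf (s *: x + t *: y) z = s * Bf x z + t * Bf y z.
Proof. rewrite /Bf !mxE; ring. Qed.
Lemma BfDr (s t : C) x y z : Bf z (s *: x + t *: y) = s * Bf z x + t * Bf z y.
Proof. rewrite /Bf !mxE; ring. Qed.
Lemma Bf_self x : Bf x x = 2 * plq x.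
Proof. rewrite /Bf /plq; ring. Qed.
Lemma plqD (s t : C) x y :
  plq (s *: x + t *: y) = s ^+ 2 * plq x + t ^+ 2 * plq y + s * t * Bf x y.
Proof. rewrite /plq /Bf !mxE; ring. Qed.
Lemma plq_sum x y : plq (x + y) = plq x + plq y + Bf x y.
Proof. rewrite /plq /Bf !mxE; ring. Qed.

Definition nullpair (a b : 'rV[C]_6) := [/\ plq a = 0, plq b = 0 & Bf a b = 0].

Lemma plq_span a b s t : nullpair a b -> plq (s *: a + t *: b) = 0.
Proof. by case=> ha hb hab; rewrite plqD ha hb hab !mulr0 !addr0. Qed.

Lemma Bf_span a b s1 t1 s2 t2 : nullpair a b ->
  Bf (s1 *: a + t1 *: b) (s2 *: a + t2 *: b) = 0.
Proof.
case=> ha hb hab; rewrite BfDl !BfDr !Bf_self ha hb (BfC b a) hab; ring.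
Qed.

Lemma null_lineP (a b : 'rV[C]_6) :
  null_line (col_mx a b) <-> indep a b /\ nullpair a b.
Proof.
split.
  move=> [r2 nl]; split; first exact: rank2_indep.
  have ha : plq a = 0 by apply: nl; exact: (sub_colL _ _ a b).
  have hb : plq b = 0 by apply: nl; exact: (sub_colR _ _ a b).
  split => //; have := nl (a + b).
  rewrite /inQ plq_sum ha hb !add0r; apply; apply: addmx_sub; [exact: (sub_colL _ _ a b)|exact: (sub_colR _ _ a b)].
move=> [ind np]; split; first exact: rank_mk2.
by move=> x /span2P [s [t ->]]; apply: plq_span.
Qed.

Lemma null_Bf (M : 'M[C]_(2,6)) x y : null_line M -> (x <= M)%MS -> (y <= M)%MS -> Bf x y = 0.
Proof.
move=> [_ nl] hx hy.
have : plq (x + y) = 0 by apply: nl; exact: addmx_sub.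
by rewrite plq_sum (nl _ hx) (nl _ hy) !add0r.
Qed.

Lemma nzrow m (A : 'M[C]_(m,6)) : A != 0 -> exists i, row i A != 0.
Proof.
move=> Anz; case: (pickP (fun i => row i A != 0)) => [i Hi|H]; first by exists i.
exfalso; move/negP: Anz; apply; apply/eqP/row_matrixP => i.
by move: (H i) => /negbFE/eqP ->; rewrite row0.
Qed.

Definition VL (p a b : 'rV[C]_6) := [/\ indep a b, nullpair a b & (p <= col_mx a b)%MS].

Definition qv (p' a b : 'rV[C]_6) := Bf p' b *: a + (- Bf p' a) *: b.

Lemma prop_ok p a b p' : VL p a b -> plq p' = 0 -> Bf p p' != 0 ->
  [/\ VL p' p' (qv p' a b), (qv p' a b <= col_mx a b)%MS & qv p' a b != 0].
Proof.
move=> [ind np /span2P [s [t ep]]] hp' Bnz.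
have qin : (qv p' a b <= col_mx a b)%MS by apply/span2P; eexists; eexists.
have qnz : qv p' a b != 0.
  apply/eqP => /ind [e1 e2]; move/eqP: Bnz; apply.
  rewrite ep BfDl (BfC a) (BfC b) e1; move/eqP: e2; rewrite oppr_eq0 => /eqP ->.
  ring.
have Bpq : Bf p (qv p' a b) = 0 by rewrite ep /qv; apply: Bf_span.
split=> //; split.
- move=> s' t' e.
  have : Bf p (s' *: p' + t' *: qv p' a b) = 0 by rewrite e /Bf !mxE; ring.
  rewrite BfDr Bpq mulr0 addr0 => /eqP; rewrite mulf_eq0 (negbTE Bnz) orbF => /eqP s0.
  split=> //; move: e; rewrite s0 scale0r add0r => /eqP; rewrite scaler_eq0 (negbTE qnz) orbF.
  by move/eqP.
- split=> //; first by rewrite /qv; apply: plq_span.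
  rewrite /qv BfDr; ring.
- exact: sub_colL.
Qed.

Lemma U p a b p' (M : 'M[C]_(2,6)) : VL p a b -> Bf p p' != 0 -> null_line M ->
  (p' <= M)%MS -> lines_meet (col_mx a b) M -> (M == col_mx p' (qv p' a b))%MS.
Proof.
move=> vl Bnz nM p'M meet.
have hp' : plq p' = 0 by case: nM => _; apply.
have [[ind2 _ _] _ _] := prop_ok _ _ _ _ vl hp' Bnz.
case: vl => ind np _.
have capnz : (col_mx a b :&: M)%MS != 0.
  by rewrite -mxrank_eq0 -lt0n.
have [i xnz] := nzrow _ _ capnz.
set x := row i _ in xnz.
have xc : (x <= col_mx a b :&: M)%MS by exact: row_sub.
move: xc; rewrite sub_capmx => /andP [/span2P [s [t ex]] xM].
have Bx : Bf x p' = 0 by apply: (null_Bf _ _ _ nM).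
have rel : s * Bf p' a + t * Bf p' b = 0 by rewrite -Bx ex BfDl (BfC a) (BfC b).
have qM : (qv p' a b <= M)%MS.
  case: (eqVneq s 0) => [s0|snz].
    have tnz : t != 0.
      apply/eqP => t0; move/eqP: xnz; apply; rewrite -/x ex s0 t0 !scale0r addr0.
      by [].
    have Bb : Bf p' b = 0.
      by move: rel; rewrite s0 mul0r add0r => /eqP; rewrite mulf_eq0 (negbTE tnz) /= => /eqP.
    have -> : qv p' a b = (- Bf p' a / t) *: x.
      by rewrite ex s0 /qv Bb !scale0r !add0r scalerA divfK.
    exact: scalemx_sub.
  have h : s * Bf p' a = - (t * Bf p' b) by apply/eqP; rewrite -addr_eq0 rel.
  have -> : qv p' a b = (Bf p' b / s) *: x.
    rewrite ex /qv scalerDr !scalerA divfK //; congr (_ + _); congr (_ *: _).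
    by apply: (mulfI snz); rewrite mulrN h opprK; field.
  exact: scalemx_sub.
have sub : (col_mx p' (qv p' a b) <= M)%MS by rewrite col_mx_sub p'M qM.
have : (col_mx p' (qv p' a b) == M)%MS.
  rewrite -(geq_leqif (mxrank_leqif_eq sub)).
  by case: nM => -> _; rewrite rank_mk2.
by move=> /eqmxP e; apply/eqmxP; apply: eqmx_sym.
Qed.

Lemma Bf4 (a b u v : 'rV[C]_6) (k1 k2 k3 k4 l1 l2 l3 l4 : C) :
  Bf (k1 *: a + k2 *: b + k3 *: u + k4 *: v) (l1 *: a + l2 *: b + l3 *: u + l4 *: v) =
  k1 * l1 * Bf a a + k2 * l2 * Bf b b + k3 * l3 * Bf u u + k4 * l4 * Bf v v
  + (k1 * l2 + k2 * l1) * Bf a b + (k1 * l3 + k3 * l1) * Bf a u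
  + (k1 * l4 + k4 * l1) * Bf a v + (k2 * l3 + k3 * l2) * Bf b u
  + (k2 * l4 + k4 * l2) * Bf b v + (k3 * l4 + k4 * l3) * Bf u v.
Proof. rewrite /Bf !mxE; ring. Qed.

Lemma BfZr (k : C) x y : Bf x (k *: y) = k * Bf x y.
Proof. rewrite /Bf !mxE; ring. Qed.

Lemma Bf0 x : plq x = 0 -> Bf x x = 0.
Proof. by move=> h; rewrite Bf_self h mulr0. Qed.

Lemma two_nz : (2 : C) != 0.
Proof. by rewrite pnatr_eq0. Qed.

Lemma coplanar_coef (p1 p2 p3 p4 : 'rV[C]_6) :
  plq p1 = 0 -> plq p2 = 0 -> plq p4 = 0 ->
  Bf p1 p2 != 0 -> Bf p1 p4 != 0 -> Bf p2 p4 != 0 ->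
  (\rank (col_mx (col_mx p1 p2) (col_mx p3 p4)) <= 3)%N ->
  exists x y z, p3 = x *: p1 + y *: p2 + z *: p4.
Proof.
move=> h1 h2 h4 B12 B14 B24 rk.
have p1nz : p1 != 0 by apply: contraNneq B12 => ->; rewrite /Bf !mxE; apply/eqP; ring.
have n21 : ~~ (p2 <= p1)%MS.
  apply/negP => /sub_rVP [k e]; move/eqP: B12; apply.
  by rewrite e BfZr Bf0 // mulr0.
have n4 : ~~ (p4 <= col_mx p1 p2)%MS.
  apply/negP => /span2P [s [t e]].
  have e1 : Bf p1 p4 = t * Bf p1 p2 by rewrite e BfDr Bf0 // mulr0 add0r.
  have e2 : Bf p2 p4 = s * Bf p1 p2 by rewrite e BfDr Bf0 // mulr0 addr0 BfC.
  have : plq p4 = s * t * Bf p1 p2 by rewrite {1}e plqD h1 h2 !mulr0 !add0r.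
  rewrite h4 => /esym /eqP; rewrite !mulf_eq0 (negbTE B12) orbF => /orP [/eqP s0|/eqP t0].
    by move/eqP: B24; apply; rewrite e2 s0 mul0r.
  by move/eqP: B14; apply; rewrite e1 t0 mul0r.
have r2 : \rank (col_mx p1 p2) = 2%N by rewrite rank_add1 // rank_rV p1nz.
have r3 : \rank (col_mx (col_mx p1 p2) p4) = 3%N by rewrite rank_add1 // r2.
have p3T : (p3 <= col_mx (col_mx p1 p2) p4)%MS.
  apply/negPn/negP => n3.
  have := rank_add1 _ _ _ n3; rewrite r3 => r4.
  have sub : (col_mx (col_mx (col_mx p1 p2) p4) p3 <=
              col_mx (col_mx p1 p2) (col_mx p3 p4))%MS.
    rewrite !col_mx_sub.
    have sL := sub_colL _ _ (col_mx p1 p2) (col_mx p3 p4).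
    have sR := sub_colR _ _ (col_mx p1 p2) (col_mx p3 p4).
    rewrite (submx_trans (sub_colL _ _ p1 p2) sL) (submx_trans (sub_colR _ _ p1 p2) sL).
    by rewrite (submx_trans (sub_colR _ _ p3 p4) sR) (submx_trans (sub_colL _ _ p3 p4) sR).
  have := mxrankS sub; rewrite r4 => /leq_trans /(_ rk); by [].
have [w [z [/span2P [x [y ->]] ->]]] := sub_colP _ _ _ _ p3T.
by exists x, y, z.
Qed.

Lemma Bf4l (a b u v w : 'rV[C]_6) (k1 k2 k3 k4 : C) :
  Bf (k1 *: a + k2 *: b + k3 *: u + k4 *: v) w =
  k1 * Bf a w + k2 * Bf b w + k3 * Bf u w + k4 * Bf v w.
Proof. rewrite /Bf !mxE; ring. Qed.

Lemma FC (p1 p2 p3 p4 a b : 'rV[C]_6) :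
  plq p1 = 0 -> plq p2 = 0 -> plq p3 = 0 -> plq p4 = 0 ->
  Bf p1 p2 != 0 -> Bf p1 p3 != 0 -> Bf p1 p4 != 0 ->
  Bf p2 p3 != 0 -> Bf p2 p4 != 0 -> Bf p3 p4 != 0 ->
  (\rank (col_mx (col_mx p1 p2) (col_mx p3 p4)) <= 3)%N ->
  VL p1 a b ->
  (col_mx p3 (qv p3 p2 (qv p2 a b)) == col_mx p3 (qv p3 p4 (qv p4 a b)))%MS.
Proof.
move=> h1 h2 h3 h4 B12 B13 B14 B23 B24 B34 rk vl.
have [x [y [z e3]]] := coplanar_coef _ _ _ _ h1 h2 h4 B12 B14 B24 rk.
have vl1 := vl.
case: vl1 => ind np /span2P [s [t e1]].
have [pa pb Bab] := np.
have Baa := Bf0 _ pa; have Bbb := Bf0 _ pb.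
have B22 := Bf0 _ h2; have B44 := Bf0 _ h4.
have znz : z != 0.
  apply/eqP => z0; move: e3; rewrite z0 scale0r addr0 => e3.
  have : plq p3 = x * y * Bf p1 p2 by rewrite e3 plqD h1 h2 !mulr0 !add0r.
  rewrite h3 => /esym /eqP; rewrite !mulf_eq0 (negbTE B12) orbF => /orP [/eqP x0|/eqP y0].
    by move: B23; rewrite e3 x0 scale0r add0r BfZr Bf0 // mulr0 eqxx.
  by move: B13; rewrite e3 y0 scale0r addr0 BfZr Bf0 // mulr0 eqxx.
have E3 : p3 = (x * s) *: a + (x * t) *: b + y *: p2 + z *: p4.
  by rewrite e3 e1; apply/rowP => j; rewrite !mxE; ring.
have Eq2 : qv p2 a b = Bf b p2 *: a + (- Bf a p2) *: b + 0 *: p2 + 0 *: p4.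
  by rewrite /qv (BfC p2 b) (BfC p2 a); apply/rowP => j; rewrite !mxE; ring.
have Eq4 : qv p4 a b = Bf b p4 *: a + (- Bf a p4) *: b + 0 *: p2 + 0 *: p4.
  by rewrite /qv (BfC p4 b) (BfC p4 a); apply/rowP => j; rewrite !mxE; ring.
set D := Bf b p2 * Bf a p4 - Bf a p2 * Bf b p4.
have k1 : Bf p3 (qv p2 a b) = z * D.
  by rewrite E3 Eq2 Bf4 Baa Bbb Bab B22 B44 /D; ring.
have k3 : Bf p3 (qv p4 a b) = - (y * D).
  by rewrite E3 Eq4 Bf4 Baa Bbb Bab B22 B44 /D; ring.
have k2 : Bf p3 p2 = x * (s * Bf a p2 + t * Bf b p2) + z * Bf p2 p4.
  by rewrite E3 Bf4l B22 (BfC p4 p2); ring.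
have k4 : Bf p3 p4 = x * (s * Bf a p4 + t * Bf b p4) + y * Bf p2 p4.
  by rewrite E3 Bf4l B44; ring.
set N := x * y * (s * Bf a p2 + t * Bf b p2) + x * z * (s * Bf a p4 + t * Bf b p4)
         + y * z * Bf p2 p4.
have N0 : N = 0.
  have : 2 * N = Bf p3 p3.
    by rewrite E3 Bf4 Baa Bbb Bab B22 B44 /N; ring.
  rewrite Bf0 // => /eqP; rewrite mulf_eq0 (negbTE two_nz) /= => /eqP.
  by [].
set W := (z * Bf b p4 - y * Bf b p2) *: a + (y * Bf a p2 - z * Bf a p4) *: b.
have key : z ^+ 2 *: qv p3 p4 (qv p4 a b) =
           y ^+ 2 *: qv p3 p2 (qv p2 a b) - (y * z * D) *: p3 - N *: W.
  have eb3 : qv p3 p2 (qv p2 a b) = (z * D) *: p2 +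
      (- (x * (s * Bf a p2 + t * Bf b p2) + z * Bf p2 p4)) *: qv p2 a b.
    by rewrite {1}/qv k1 k2.
  have eb3' : qv p3 p4 (qv p4 a b) = (- (y * D)) *: p4 +
      (- (x * (s * Bf a p4 + t * Bf b p4) + y * Bf p2 p4)) *: qv p4 a b.
    by rewrite {1}/qv k3 k4.
  rewrite eb3 eb3'.
  rewrite E3 /W /N /D /qv (BfC p2 b) (BfC p2 a) (BfC p4 b) (BfC p4 a).
  by apply/rowP => j; rewrite !mxE; ring.
move: key; rewrite N0 scale0r subr0 => key.
have [[i2 n2 _] _ _] := prop_ok _ _ _ _ vl h2 B12.
have B14' : Bf p1 p4 != 0 := B14.
have [[i4 n4 _] _ _] := prop_ok _ _ _ _ vl h4 B14'.
have vl2 : VL p2 p2 (qv p2 a b) by split => //; exact: sub_colL.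
have vl4 : VL p4 p4 (qv p4 a b) by split => //; exact: sub_colL.
have [[i3 _ _] _ _] := prop_ok _ _ _ _ vl2 h3 B23.
have B43 : Bf p4 p3 != 0 by rewrite BfC.
have [[i3' _ _] _ _] := prop_ok _ _ _ _ vl4 h3 B43.
have z2 : z ^+ 2 != 0 by rewrite expf_neq0.
have sub : (col_mx p3 (qv p3 p4 (qv p4 a b)) <= col_mx p3 (qv p3 p2 (qv p2 a b)))%MS.
  rewrite col_mx_sub sub_colL /=; apply/span2P.
  exists (- (y * z * D) / z ^+ 2), (y ^+ 2 / z ^+ 2).
  apply: (scalerI z2); rewrite key [RHS]scalerDr ![in RHS]scalerA.
  have -> : z ^+ 2 * (- (y * z * D) / z ^+ 2) = - (y * z * D) by field.
  have -> : z ^+ 2 * (y ^+ 2 / z ^+ 2) = y ^+ 2 by field.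
  by rewrite scaleNr addrC.
have : (col_mx p3 (qv p3 p4 (qv p4 a b)) == col_mx p3 (qv p3 p2 (qv p2 a b)))%MS.
  by rewrite -(geq_leqif (mxrank_leqif_eq sub)) !rank_mk2.
by move=> /eqmxP e; apply/eqmxP; apply: eqmx_sym.
Qed.

Definition mk2 (l : 'rV[C]_6 * 'rV[C]_6) : 'M[C]_(2,6) := col_mx l.1 l.2.
Definition step (l : 'rV[C]_6 * 'rV[C]_6) (p' : 'rV[C]_6) := (p', qv p' l.1 l.2).
Definition VLl p (l : 'rV[C]_6 * 'rV[C]_6) := VL p l.1 l.2.

Lemma eqT (A B D : 'M[C]_(2,6)) : (A == B)%MS -> (B == D)%MS -> (A == D)%MS.
Proof. by move=> /eqmxP e1 /eqmxP e2; apply/eqmxP; exact: eqmx_trans e1 e2. Qed.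
Lemma eqS (A B : 'M[C]_(2,6)) : (A == B)%MS -> (B == A)%MS.
Proof. by move=> /eqmxP e1; apply/eqmxP; exact: eqmx_sym. Qed.

Lemma meet_of (A B : 'M[C]_(2,6)) (x : 'rV[C]_6) : x != 0 -> (x <= A)%MS -> (x <= B)%MS -> lines_meet A B.
Proof.
move=> xnz xA xB; rewrite /lines_meet lt0n; apply/negP => /eqP.
move/eqP; rewrite mxrank_eq0 => /eqP c0.
have : (x <= A :&: B)%MS by rewrite sub_capmx xA xB.
by rewrite c0 submx0 (negbTE xnz).
Qed.

Lemma meet_sym (A B : 'M[C]_(2,6)) : lines_meet A B -> lines_meet B A.
Proof. by rewrite /lines_meet capmxC. Qed.

Lemma meet_eqL (A A' B : 'M[C]_(2,6)) : (A == A')%MS -> lines_meet A B -> lines_meet A' B.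
Proof.
move=> /andP [s _]; rewrite /lines_meet => h; apply: leq_trans h _.
by apply: mxrankS; apply: capmxS => //; exact: submx_refl.
Qed.

Lemma VL_null p l : VLl p l -> null_line (mk2 l).
Proof. by case=> ind np _; apply/null_lineP. Qed.

Lemma VL_sub p l : VLl p l -> (p <= mk2 l)%MS.
Proof. by case. Qed.

Lemma VL_plq p l : VLl p l -> plq p = 0.
Proof. by move=> v; case: (VL_null _ _ v) => _; apply; exact: VL_sub. Qed.

Lemma step_VL p l p' : VLl p l -> plq p' = 0 -> Bf p p' != 0 -> VLl p' (step l p').
Proof. by move=> v h B; case: (prop_ok _ _ _ _ v h B). Qed.

Lemma step_meet p l p' : VLl p l -> plq p' = 0 -> Bf p p' != 0 ->
  lines_meet (mk2 l) (mk2 (step l p')).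
Proof.
move=> v h B; have [_ qs qnz] := prop_ok _ _ _ _ v h B.
apply: (meet_of _ _ _ qnz qs); exact: (sub_colR _ _ p' _).
Qed.

Lemma Ulem p l p' (M : 'M[C]_(2,6)) : VLl p l -> Bf p p' != 0 -> null_line M ->
  (p' <= M)%MS -> lines_meet (mk2 l) M -> (M == mk2 (step l p'))%MS.
Proof. move=> v B nM pM mt; exact: (U _ _ _ _ _ v B nM pM mt). Qed.

Lemma edge_sym p l p' l' : VLl p l -> VLl p' l' -> Bf p p' != 0 ->
  (mk2 l == mk2 (step l' p))%MS -> (mk2 l' == mk2 (step l p'))%MS.
Proof.
move=> v v' B e.
apply: (Ulem _ _ _ _ v B (VL_null _ _ v') (VL_sub _ _ v')).
apply: (meet_eqL _ _ _ (eqS _ _ e)).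
apply: meet_sym; apply: (step_meet _ _ _ v' (VL_plq _ _ v)).
by rewrite BfC.
Qed.

Lemma step_congr p' l1 l2 p : VLl p' l1 -> VLl p' l2 -> (mk2 l1 == mk2 l2)%MS ->
  plq p = 0 -> Bf p' p != 0 -> (mk2 (step l1 p) == mk2 (step l2 p))%MS.
Proof.
move=> v1 v2 e h B; apply: eqS.
have v2' := step_VL _ _ _ v2 h B.
apply: (Ulem _ _ _ _ v1 B (VL_null _ _ v2') (VL_sub _ _ v2')).
apply: (meet_eqL _ _ _ (eqS _ _ e)); exact: step_meet v2 h B.
Qed.

Lemma realpt_plq (v : 'rV[C]_4) : plq (realpt v) = 0.
Proof.
have [_ _ s4 s3 p] := realpt_rstruct v.
rewrite /plq s4 s3 mulrN; apply/eqP; rewrite subr_eq0 p; apply/eqP; ring.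
Qed.

Lemma Bf_nz (v w : 'rV[C]_4) : v != 0 -> w != 0 -> distinctS4 v w -> Bf (realpt v) (realpt w) != 0.
Proof. move=> nv nw d; apply/eqP => B0; move/negP: d; apply; exact: K_eq. Qed.

Lemma real_unique (M : 'M[C]_(2,6)) (v w : 'rV[C]_4) : null_line M -> v != 0 -> w != 0 ->
  (realpt v <= M)%MS -> (realpt w <= M)%MS -> (realpt v == realpt w)%MS.
Proof. move=> nM nv nw hv hw; apply: K_eq => //; exact: (null_Bf _ _ _ nM). Qed.

Lemma PoszS (k : nat) : Posz k + 1 = Posz k.+1.
Proof. lia. Qed.
Lemma NegzS (k : nat) : Negz k.+1 + 1 = Negz k.
Proof. rewrite !NegzE; lia. Qed.

Lemma int_ind2 (Q : int -> Prop) : Q 0 -> (forall m, Q m -> Q (m + 1)) ->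
  (forall m, Q (m + 1) -> Q m) -> forall m, Q m.
Proof.
move=> h0 hu hd [k|k].
  elim: k => // k IH; rewrite -PoszS; exact: hu.
elim: k => [|k IH]; apply: hd => //; by rewrite NegzS.
Qed.

Fixpoint Gp (l : 'rV[C]_6 * 'rV[C]_6) (f : int -> 'rV[C]_6) (k : nat) :=
  match k with 0 => l | k'.+1 => step (Gp l f k') (f (Posz k'.+1)) end.
Fixpoint Gn (l : 'rV[C]_6 * 'rV[C]_6) (f : int -> 'rV[C]_6) (k : nat) :=
  match k with 0 => l | k'.+1 => step (Gn l f k') (f (Negz k')) end.
Definition G l f (m : int) := match m with Posz k => Gp l f k | Negz k => Gn l f k.+1 end.

Lemma G0 l f : G l f 0 = l.
Proof. by []. Qed.

Lemma Gpos l f (k : nat) : G l f (Posz k + 1) = step (G l f (Posz k)) (f (Posz k + 1)).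
Proof. by rewrite PoszS. Qed.

Lemma Gneg l f (k : nat) : G l f (Negz k) = step (G l f (Negz k + 1)) (f (Negz k)).
Proof. by case: k => [|k] //; rewrite NegzS. Qed.

Lemma chain l f : VLl (f 0) l -> (forall m, plq (f m) = 0) ->
  (forall m, Bf (f m) (f (m + 1)) != 0) ->
  forall m, VLl (f m) (G l f m) /\ (mk2 (G l f (m + 1)%R) == mk2 (step (G l f m) (f (m + 1)%R)))%MS.
Proof.
move=> v0 hq hB.
have hB' : forall m, Bf (f (m + 1)) (f m) != 0 by move=> m; rewrite BfC.
have V : forall m, VLl (f m) (G l f m).
  case=> k.
    elim: k => // k IH; rewrite -PoszS Gpos; apply: step_VL IH _ _; [exact: hq|exact: hB].
  elim: k => [|k IH].
    rewrite Gneg; apply: step_VL; [exact: v0|exact: hq|exact: (hB' (Negz 0))].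
  rewrite Gneg; move: IH; rewrite -NegzS => IH.
  apply: step_VL IH _ _; [exact: hq|exact: hB'].
move=> m; split; first exact: V.
case: m => k; first by rewrite Gpos; by apply/eqmxP; exact: eqmx_refl.
apply: (edge_sym _ _ _ _ (V _) (V _) (hB _)).
rewrite Gneg; by apply/eqmxP; exact: eqmx_refl.
Qed.

Definition Face (p1 p2 p3 p4 : 'rV[C]_6) :=
  [/\ [/\ plq p1 = 0, plq p2 = 0, plq p3 = 0 & plq p4 = 0],
      [/\ Bf p1 p2 != 0, Bf p1 p3 != 0 & Bf p1 p4 != 0],
      [/\ Bf p2 p3 != 0, Bf p2 p4 != 0 & Bf p3 p4 != 0] &
      (\rank (col_mx (col_mx p1 p2) (col_mx p3 p4)) <= 3)%N].

Lemma face_FC p1 p2 p3 p4 l : Face p1 p2 p3 p4 -> VLl p1 l ->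
  (mk2 (step (step l p2) p3) == mk2 (step (step l p4) p3))%MS.
Proof.
move=> [[h1 h2 h3 h4] [B12 B13 B14] [B23 B24 B34] rk] v.
exact: (FC _ _ _ _ _ _ h1 h2 h3 h4 B12 B13 B14 B23 B24 B34 rk v).
Qed.

Lemma face_rev p1 p2 p3 p4 : Face p1 p2 p3 p4 -> Face p4 p3 p2 p1.
Proof.
move=> [[h1 h2 h3 h4] [B12 B13 B14] [B23 B24 B34] rk].
split; first by split.
- by split; rewrite BfC.
- by split; rewrite BfC.
apply: leq_trans rk; apply: mxrankS.
set S := col_mx (col_mx p1 p2) (col_mx p3 p4).
have sL := sub_colL _ _ (col_mx p1 p2) (col_mx p3 p4).
have sR := sub_colR _ _ (col_mx p1 p2) (col_mx p3 p4).
rewrite !col_mx_sub.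
rewrite (submx_trans (sub_colL _ _ p1 p2) sL) (submx_trans (sub_colR _ _ p1 p2) sL).
by rewrite (submx_trans (sub_colR _ _ p3 p4) sR) (submx_trans (sub_colL _ _ p3 p4) sR).
Qed.

Lemma eqTr (u v w : 'rV[C]_6) : (u == v)%MS -> (v == w)%MS -> (u == w)%MS.
Proof. by move=> /eqmxP e1 /eqmxP e2; apply/eqmxP; exact: eqmx_trans e1 e2. Qed.
Lemma eqSr (u v : 'rV[C]_6) : (u == v)%MS -> (v == u)%MS.
Proof. by move=> /eqmxP e1; apply/eqmxP; exact: eqmx_sym. Qed.

Lemma dist_real (M M' : 'M[C]_(2,6)) (a a' : 'rV[C]_4) :
  null_line M -> null_line M' -> a != 0 -> a' != 0 ->
  (realpt a <= M)%MS -> (realpt a' <= M')%MS -> distinctS4 a a' ->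
  distinct_real_points M M'.
Proof.
move=> nM nM' na na' ha ha' d v w [vnz hv] [wnz hw].
have e1 := real_unique _ _ _ nM na vnz ha hv.
have e2 := real_unique _ _ _ nM' na' wnz ha' hw.
apply/negP => e; move/negP: d; apply.
exact: eqTr _ _ _ (eqTr _ _ _ e1 e) (eqSr _ _ e2).
Qed.

Lemma main_sec (phi : int -> int -> 'rV[C]_4) :
  circular_net phi ->
  forall L0 : 'M[C]_(2,6),
    contact_element L0 -> (realpt (phi 0 0) <= L0)%MS ->
    exists Phi : int -> int -> 'M[C]_(2,6),
      [/\ principal_contact_element_net Phi,
          congruent Phi phi,
          (Phi 0 0 == L0)%MS
        & forall Psi : int -> int -> 'M[C]_(2,6),
            principal_contact_element_net Psi -> congruent Psi phi ->
            (Psi 0 0 == L0)%MS -> forall m n, (Psi m n == Phi m n)%MS].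
Proof.
move=> [nz circ] L0 [nL0 _] p0L0.
pose P m n := realpt (phi m n).
have hq : forall m n, plq (P m n) = 0 by move=> m n; exact: realpt_plq.
have face : forall m n, Face (P m n) (P (m + 1) n) (P (m + 1) (n + 1)) (P m (n + 1)).
  move=> m n; have [[[dab dac dad] [dbc dbd dcd]] cop] := circ m n.
  split; first by split.
  - by split; apply: Bf_nz.
  - by split; apply: Bf_nz.
  exact: cop.
have hBh : forall m n, Bf (P m n) (P (m + 1) n) != 0.
  by move=> m n; have [_ [] ] := face m n.
have hBv : forall m n, Bf (P m n) (P m (n + 1)) != 0.
  by move=> m n; have [_ [] ] := face m n.
pose l0 := (row 0 L0, row 1 L0).
have v0 : VLl (P 0 0) l0.
  move: nL0 p0L0; rewrite -{1 2}(mk2_rows L0) => /null_lineP [ind np] sub.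
  by split.
pose H := G l0 (fun m => P m 0).
have chH := chain l0 (fun m => P m 0) v0 (fun m => hq m 0) (fun m => hBh m 0).
pose Pp m n := G (H m) (P m) n.
have chV : forall m n, VLl (P m n) (Pp m n) /\
    (mk2 (Pp m (n + 1)%R) == mk2 (step (Pp m n) (P m (n + 1)%R)))%MS.
  move=> m; exact: (chain (H m) (P m) (chH m).1 (hq m) (hBv m)).
have VLP : forall m n, VLl (P m n) (Pp m n) by move=> m n; exact: (chV m n).1.
have Ev : forall m n, (mk2 (Pp m (n + 1)%R) == mk2 (step (Pp m n) (P m (n + 1)%R)))%MS.
  by move=> m n; exact: (chV m n).2.
have Eh : forall m n, (mk2 (Pp (m + 1)%R n) == mk2 (step (Pp m n) (P (m + 1)%R n)))%MS.
  move=> m; apply: int_ind2.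
  - exact: (chH m).2.
  - move=> n IH.
    apply: (eqT _ _ _ (Ev (m + 1) n)).
    apply: (eqT _ _ _ (step_congr _ _ _ _ (VLP _ _) (step_VL _ _ _ (VLP m n) (hq _ _) (hBh m n))
              IH (hq _ _) (hBv _ _))).
    apply: (eqT _ _ _ (face_FC _ _ _ _ _ (face m n) (VLP m n))).
    apply: (step_congr _ _ _ _ (step_VL _ _ _ (VLP m n) (hq _ _) (hBv m n)) (VLP _ _)
              (eqS _ _ (Ev m n)) (hq _ _) (hBh _ _)).
  - move=> n IH.
    have B1 : Bf (P (m + 1) (n + 1)) (P (m + 1) n) != 0 by rewrite BfC.
    apply: (eqT _ _ _ (edge_sym _ _ _ _ (VLP _ _) (VLP _ _) B1 (Ev (m + 1) n))).
    have B2 : Bf (P (m + 1) (n + 1)) (P (m + 1) n) != 0 by rewrite BfC.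
    apply: (eqT _ _ _ (step_congr _ _ _ _ (VLP _ _) (step_VL _ _ _ (VLP m (n + 1)) (hq _ _) (hBh m (n + 1)))
              IH (hq _ _) B2)).
    apply: (eqT _ _ _ (face_FC _ _ _ _ _ (face_rev _ _ _ _ (face m n)) (VLP m (n + 1)))).
    have B3 : Bf (P m (n + 1)) (P m n) != 0 by rewrite BfC.
    apply: (step_congr _ _ _ _ (step_VL _ _ _ (VLP m (n + 1)) (hq _ _) B3) (VLP _ _) _ (hq _ _) (hBh _ _)).
    apply: eqS; exact: (edge_sym _ _ _ _ (VLP _ _) (VLP _ _) B3 (Ev m n)).
pose Phi m n := mk2 (Pp m n).
have Phi00 : Phi 0 0 = L0 by rewrite /Phi /Pp /H !G0 /mk2 /= mk2_rows.
have princ : principal_contact_element_net Phi.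
  move=> m n; have nl : forall m n, null_line (Phi m n) by move=> *; exact: VL_null (VLP _ _).
  have sb : forall m n, (realpt (phi m n) <= Phi m n)%MS by move=> *; exact: VL_sub (VLP _ _).
  have [[[dab _ dad] _] _] := circ m n.
  split.
  - by split => //; exists (phi m n); split.
  - exact: (dist_real _ _ _ _ (nl _ _) (nl _ _) (nz _ _) (nz _ _) (sb _ _) (sb _ _) dab).
  - exact: (dist_real _ _ _ _ (nl _ _) (nl _ _) (nz _ _) (nz _ _) (sb _ _) (sb _ _) dad).
  - apply: meet_sym; apply: (meet_eqL _ _ _ (eqS _ _ (Eh m n))).
    apply: meet_sym; exact: (step_meet _ _ _ (VLP m n) (hq _ _) (hBh m n)).
  - apply: meet_sym; apply: (meet_eqL _ _ _ (eqS _ _ (Ev m n))).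
    apply: meet_sym; exact: (step_meet _ _ _ (VLP m n) (hq _ _) (hBv m n)).
exists Phi; split => //.
- by move=> m n; exact: VL_sub (VLP _ _).
- by rewrite Phi00; apply/eqmxP; exact: eqmx_refl.
move=> Psi pPsi cPsi e00.
have nullPsi : forall m n, null_line (Psi m n) by move=> m n; have [[]] := pPsi m n.
have fh : forall m n, (Psi m n == Phi m n)%MS -> (Psi (m + 1)%R n == Phi (m + 1)%R n)%MS.
  move=> m n e; have [_ _ _ mt _] := pPsi m n.
  apply: (eqT _ _ _ _ (eqS _ _ (Eh m n))).
  apply: (Ulem _ _ _ _ (VLP m n) (hBh m n) (nullPsi _ _) (cPsi _ _)).
  exact: (meet_eqL _ _ _ e mt).
have bh : forall m n, (Psi (m + 1)%R n == Phi (m + 1)%R n)%MS -> (Psi m n == Phi m n)%MS.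
  move=> m n e; have [_ _ _ mt _] := pPsi m n.
  have B : Bf (P (m + 1) n) (P m n) != 0 by rewrite BfC.
  apply: (eqT _ _ _ _ (eqS _ _ (edge_sym _ _ _ _ (VLP _ _) (VLP _ _) B (Eh m n)))).
  apply: (Ulem _ _ _ _ (VLP _ _) B (nullPsi _ _) (cPsi _ _)).
  exact: (meet_eqL _ _ _ e (meet_sym _ _ mt)).
have fv : forall m n, (Psi m n == Phi m n)%MS -> (Psi m (n + 1)%R == Phi m (n + 1)%R)%MS.
  move=> m n e; have [_ _ _ _ mt] := pPsi m n.
  apply: (eqT _ _ _ _ (eqS _ _ (Ev m n))).
  apply: (Ulem _ _ _ _ (VLP m n) (hBv m n) (nullPsi _ _) (cPsi _ _)).
  exact: (meet_eqL _ _ _ e mt).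
have bv : forall m n, (Psi m (n + 1)%R == Phi m (n + 1)%R)%MS -> (Psi m n == Phi m n)%MS.
  move=> m n e; have [_ _ _ _ mt] := pPsi m n.
  have B : Bf (P m (n + 1)) (P m n) != 0 by rewrite BfC.
  apply: (eqT _ _ _ _ (eqS _ _ (edge_sym _ _ _ _ (VLP _ _) (VLP _ _) B (Ev m n)))).
  apply: (Ulem _ _ _ _ (VLP _ _) B (nullPsi _ _) (cPsi _ _)).
  exact: (meet_eqL _ _ _ e (meet_sym _ _ mt)).
have row0 : forall m, (Psi m 0 == Phi m 0)%MS.
  apply: int_ind2; first by rewrite Phi00.
  - by move=> m; apply: fh.
  - by move=> m; apply: bh.
move=> m; apply: int_ind2; first exact: row0.
- by move=> n; apply: fv.
- by move=> n; apply: bv.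
Qed.
End S.

Theorem mainTheorem2 (R : realType) (phi : int -> int -> 'rV[R[i]]_4) :
  circular_net phi ->
  forall L0 : 'M[R[i]]_(2,6),
    contact_element L0 -> (realpt (phi 0 0) <= L0)%MS ->
    exists Phi : int -> int -> 'M[R[i]]_(2,6),
      [/\ principal_contact_element_net Phi,
          congruent Phi phi,
          (Phi 0 0 == L0)%MS
        & forall Psi : int -> int -> 'M[R[i]]_(2,6),
            principal_contact_element_net Psi -> congruent Psi phi ->
            (Psi 0 0 == L0)%MS -> forall m n, (Psi m n == Phi m n)%MS].
Proof. exact: (@main_sec R phi). Qed.
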